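(* Let $S$ be a meet semilattice and let $2\leq k\leq\omega$. The following are equivalent: (1) $\exists$ has an $\omega$-strategy in the $(m,k)$-game on $S$ with starting position $(\{a\},\{b\})$ for all $a,b\in S$ with $a\not\leq b$ and for all $2\leq m\leq\omega$; (2) $\exists$ has a $5$-strategy in the $(3,k)$-game on $S$ with starting position $(\{a\},\{b\})$ for all $a,b\in S$ with $a\not\leq b$; (3) $S$ is $k$-distributive.
   Context: Work in ZFC. A meet semilattice $S$ is regarded as a poset. $S$ is $k$-distributive if for all $m<k$ and all $x,y_1,\ldots,y_m\in S$, whenever $x\wedge(y_1\vee\cdots\vee y_m)$ exists in $S$, then $(x\wedge y_1)\vee\cdots\vee(x\wedge y_m)$ also exists in $S$ and the two are equal. For a poset $P$, $2\leq\alpha,\beta\leq\omega$ and $U_0,V\subseteq P$, the $(\alpha,\beta)$-game with starting position $(U_0,V)$ is played between $\forall$ and $\exists$ in rounds $0,1,2,\ldots$; a set $U$ is maintained, initially $U_0$, with $V$ fixed. Each round $\forall$ moves and $\exists$ responds: (1) if $b\geq a$ for some $a\in U$, $\forall$ may play $(b)$ and $\exists$ must add $b$ to $U$; (2) if $A\subseteq U$ with $|A|<\alpha$ and $\bigwedge A$ exists in $P$, $\forall$ may play $A$ and $\exists$ must add $\bigwedge A$ to $U$; (3) if $B\subseteq P$ with $|B|<\beta$ and $\bigvee B$ exists in $P$ and lies in $U$, $\forall$ may play $B$ and $\exists$ must choose some $b\in B$ and add it to $U$. $\forall$ wins in round $n$ if $U\cap V\neq\emptyset$ at the beginning of round $n$.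 $\exists$ has an $n$-strategy if she can guarantee that $\forall$ does not win until at least round $n+1$, and an $\omega$-strategy if she can guarantee that $\forall$ never wins. *)

(* Defs.v *)
From mathcomp Require Import all_boot all_order.
Set Implicit Arguments. Unset Strict Implicit. Unset Printing Implicit Defensive.
Import Order.Theory.
Local Open Scope order_scope.

Inductive cardw : Type := fin of nat | omega.

Definition two_le (a : cardw) : Prop :=
  match a with fin n => (2 <= n)%N | omega => True end.

Definition nat_lt_cardw (n : nat) (a : cardw) : Prop :=
  match a with fin k => (n < k)%N | omega => True end.

Definition card_lt (T : eqType) (A : T -> Prop) (a : cardw) : Prop :=
  exists s : seq T, uniq s /\ (forall x, A x <-> x \in s) /\ nat_lt_cardw (size s) a.

Section Poset.
Context {d : Order.disp_t} {P : porderType d}.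

Definition is_glb (A : P -> Prop) (g : P) : Prop :=
  (forall x, A x -> g <= x) /\ (forall y, (forall x, A x -> y <= x) -> y <= g).

Definition is_lub (B : P -> Prop) (j : P) : Prop :=
  (forall x, B x -> x <= j) /\ (forall y, (forall x, B x -> x <= y) -> j <= y).

Definition add (U : P -> Prop) (x : P) : P -> Prop := fun y => U y \/ y = x.

Definition disjoint (U V : P -> Prop) : Prop := forall x, U x -> ~ V x.

(* One round of the (alpha,beta)-game at position U: for every legal move of
   forall, exists has a response leading to a position satisfying W. *)
Definition round_ok (alpha beta : cardw) (U : P -> Prop) (W : (P -> Prop) -> Prop)
  : Prop :=
  (forall a b, U a -> a <= b -> W (add U b)) /\
  (forall (A : P -> Prop) g, (forall x, A x -> U x) -> card_lt A alpha ->
      is_glb A g -> W (add U g)) /\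
  (forall (B : P -> Prop) j, card_lt B beta -> is_lub B j -> U j ->
      exists b, B b /\ W (add U b)).

(* exists has an n-strategy in the (alpha,beta)-game from position (U,V):
   forall does not win before round n+1 (U meets V at the start of no round
   0..n), whatever forall plays. *)
Fixpoint has_nstrat (alpha beta : cardw) (V : P -> Prop) (n : nat) (U : P -> Prop)
  : Prop :=
  disjoint U V /\
  match n with
  | 0 => True
  | n'.+1 => round_ok alpha beta U (has_nstrat alpha beta V n')
  end.

(* exists has an omega-strategy from (U0,V): there is a family W of positions
   containing U0, all disjoint from V, such that from any position in W
   exists can answer every move of forall staying in W. *)
Definition has_wstrat (alpha beta : cardw) (V : P -> Prop) (U0 : P -> Prop) : Prop :=
  exists W : (P -> Prop) -> Prop, W U0 /\
    forall U, W U -> disjoint U V /\ round_ok alpha beta U W.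

End Poset.

Definition k_distributive {d : Order.disp_t} (S : meetSemilatticeType d)
  (k : cardw) : Prop :=
  forall (ys : seq S), nat_lt_cardw (size ys) k ->
  forall (x z : S), is_lub (fun y => y \in ys) z ->
    is_lub (fun w => exists2 y, y \in ys & w = x `&` y) (x `&` z).

(* Main.v *)
Require Import Defs.
From mathcomp Require Import all_boot all_order.
From Stdlib Require Import Classical.
Import Order.Theory.
Local Open Scope order_scope.

Section Aux.
Context {d : Order.disp_t} {S : meetSemilatticeType d}.

Definition M (a : S) (s : seq S) := foldr Order.meet a s.

Lemma leM (y a : S) s : (y <= M a s) = (y <= a) && all (fun t => y <= t) s.
Proof.
elim: s => [|t s IH] /=; first by rewrite andbT.
rewrite lexI IH; by case: (y <= t); case: (y <= a).
Qed.

Lemma M_le a s t : t \in s -> M a s <= t.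
Proof. move=> ts; have /andP [_ /allP H] : (M a s <= a) && all (fun t => M a s <= t) s by rewrite -leM. exact: H. Qed.

Lemma M_lea a s : M a s <= a.
Proof. have /andP [H _] : (M a s <= a) && all (fun t => M a s <= t) s by rewrite -leM. exact: H. Qed.

Lemma M_bound y a s : y <= a -> (forall t, t \in s -> y <= t) -> y <= M a s.
Proof. move=> ya H; rewrite leM ya /=; exact/allP. Qed.

Lemma nat_lt_mono n n' (c : cardw) : (n <= n')%N -> nat_lt_cardw n' c -> nat_lt_cardw n c.
Proof. case: c => //= k h1 h2; exact: leq_ltn_trans h1 h2. Qed.

Variables (a b : S).

Definition good (U : S -> Prop) := forall s : seq S, (forall u, u \in s -> U u) -> ~~ (M a s <= b).

Lemma good_up U a0 b' : good U -> U a0 -> a0 <= b' -> good (add U b').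
Proof.
move=> gU Ua0 le s Hs.
pose f := fun y => if y == b' then a0 else y.
have Hs' : forall u, u \in map f s -> U u.
  move=> u /mapP [y ys ->]; rewrite /f; case: eqP => [_|ne] //.
  by case: (Hs y ys).
apply: contra (gU _ Hs') => Hle; apply: le_trans Hle.
apply: M_bound; first exact: M_lea.
move=> t ts; have H1 := M_le a _ _ (map_f f ts); apply: le_trans H1 _.
rewrite /f; by case: eqP => [->|].
Qed.

Lemma good_meet (m : cardw) U A g : good U -> (forall x, A x -> U x) -> card_lt A m ->
  is_glb A g -> good (add U g).
Proof.
move=> gU AU [sA [_ [HA _]]] [glb1 glb2] s Hs.
pose s' := filter (fun y => y != g) s ++ sA.
have Hs' : forall u, u \in s' -> U u.
  move=> u; rewrite mem_cat mem_filter => /orP [/andP [ne us] | uA].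
    case: (Hs u us) => // E; by rewrite E eqxx in ne.
  by apply AU; apply/HA.
apply: contra (gU _ Hs') => Hle; apply: le_trans Hle.
apply: M_bound; first exact: M_lea.
move=> t ts; case: (eqVneq t g) => [->|ne].
  apply: glb2 => x Ax; apply: M_le; rewrite mem_cat; apply/orP; right; exact/HA.
by apply: M_le; rewrite mem_cat mem_filter ne ts.
Qed.

Lemma M_cat_l r t : M a (r ++ t) <= M a r.
Proof. apply: M_bound; first exact: M_lea. by move=> u ur; apply: M_le; rewrite mem_cat ur. Qed.
Lemma M_cat_r r t : M a (r ++ t) <= M a t.
Proof. apply: M_bound; first exact: M_lea. by move=> u ur; apply: M_le; rewrite mem_cat ur orbT. Qed.

Lemma collect (U : S -> Prop) (sB : seq S) :
  (forall c, c \in sB -> exists r, (forall u, u \in r -> U u) /\ c `&` M a r <= b) ->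
  exists t, (forall u, u \in t -> U u) /\ forall c, c \in sB -> c `&` M a t <= b.
Proof.
elim: sB => [|c sB IH] H; first by exists [::]; split.
have [r [Hr Hc]] := H c (mem_head _ _).
have [t [Ht Hct]] : exists t, (forall u, u \in t -> U u) /\ forall c, c \in sB -> c `&` M a t <= b.
  by apply: IH => c' h; apply: H; rewrite in_cons h orbT.
exists (r ++ t); split.
  by move=> u; rewrite mem_cat => /orP [] ?; [apply: Hr | apply: Ht].
move=> c'; rewrite in_cons => /orP [/eqP -> | h].
  apply: le_trans Hc; apply: leI2 => //; exact: M_cat_l.
apply: le_trans (Hct c' h); apply: leI2 => //; exact: M_cat_r.
Qed.

Lemma good_join (k : cardw) U B j : k_distributive S k -> good U -> card_lt B k ->
  is_lub B j -> U j -> exists c, B c /\ good (add U c).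
Proof.
move=> kd gU [sB [_ [HB sz]]] [lub1 lub2] Uj.
apply: NNPP => Hno.
have H : forall c, c \in sB -> exists r, (forall u, u \in r -> U u) /\ c `&` M a r <= b.
  move=> c cs.
  have ng : ~ good (add U c) by move=> g; apply: Hno; exists c; split => //; apply/HB.
  apply: NNPP => Hr; apply: ng => s Hs; apply/negP => Hle; apply: Hr.
  exists (filter (fun y => y != c) s); split.
    move=> u; rewrite mem_filter => /andP [ne us].
    case: (Hs u us) => // E; by rewrite E eqxx in ne.
  apply: le_trans Hle; apply: M_bound.
    apply: le_trans (leIr _ _) (M_lea _ _).
  move=> t ts; case: (eqVneq t c) => [->|ne]; first exact: leIl.
  apply: le_trans (leIr _ _) _; apply: M_le; by rewrite mem_filter ne ts.
have [t [Ht Hct]] := collect U sB H.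
pose x := M a (j :: t).
have xj : x <= j by apply: M_le; exact: mem_head.
have xt : x <= M a t.
  apply: M_bound; first exact: M_lea.
  by move=> u ut; apply: M_le; rewrite in_cons ut orbT.
have zl : is_lub (fun y => y \in sB) j.
  split; first by move=> y ys; apply: lub1; apply/HB.
  by move=> y Hy; apply: lub2 => w Bw; apply: Hy; apply/HB.
have [_ l2] := kd sB sz x j zl.
have : x `&` j <= b.
  apply: l2 => w [c cs ->].
  apply: le_trans (Hct c cs); rewrite meetC; apply: leI2 => //.
rewrite (meet_l xj) => xb.
have := gU (j :: t).
have Hjt : forall u, u \in j :: t -> U u.
  by move=> u; rewrite in_cons => /orP [/eqP -> | ut] //; apply: Ht.
by move=> /(_ Hjt); rewrite xb.
Qed.

End Aux.

Lemma round_ok_mono {d : Order.disp_t} {P : porderType d} (al be : cardw) (U : P -> Prop)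
  (W W' : (P -> Prop) -> Prop) :
  (forall U, W U -> W' U) -> round_ok al be U W -> round_ok al be U W'.
Proof.
move=> HW [r1 [r2 r3]]; split; last split.
- by move=> x y Ux le; apply: HW; exact: (r1 _ _ Ux le).
- by move=> A g h1 h2 h3; apply: HW; exact: (r2 _ _ h1 h2 h3).
- move=> B j h1 h2 h3; have [c [Bc Wc]] := r3 B j h1 h2 h3; exists c; split => //; exact: HW.
Qed.

Lemma wstrat_n {d : Order.disp_t} {P : porderType d} (al be : cardw) (V : P -> Prop)
  (W : (P -> Prop) -> Prop) :
  (forall U, W U -> Defs.disjoint U V /\ round_ok al be U W) ->
  forall n U, W U -> has_nstrat al be V n U.
Proof.
move=> HW; elim=> [|n IH] U WU /=; have [dj ro] := HW U WU; split => //.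
exact: round_ok_mono ro.
Qed.

Theorem proposition6p2 (d : Order.disp_t) (S : meetSemilatticeType d) (k : cardw) :
  two_le k ->
  let P1 := forall a b : S, ~~ (a <= b) -> forall m : cardw, two_le m ->
              has_wstrat m k (fun x => x = b) (fun x => x = a) in
  let P2 := forall a b : S, ~~ (a <= b) ->
              has_nstrat (fin 3) k (fun x => x = b) 5 (fun x => x = a) in
  let P3 := k_distributive S k in
  (P1 <-> P2) /\ (P2 <-> P3).
Proof.
move=> _ P1 P2 P3.
have h12 : P1 -> P2.
  move=> H a b nab; have [W [W0 HW]] := H a b nab (fin 3) isT.
  exact: (wstrat_n _ _ _ _ HW 5 _ W0).
have h23 : P2 -> P3.
  move=> H2 ys sz x z [zub zl]; split.
    move=> w [y ys' ->]; apply: leI2 => //; exact: zub.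
  move=> w Hw; case: (boolP (x `&` z <= w)) => // Hn; exfalso.
  have := H2 _ _ Hn; set a := x `&` z => /= [[_ [r1 _]]].
  have := r1 a z erefl (leIr z x) => -[_ [_ [_ r3]]].
  have cB : card_lt (fun y => y \in ys) k.
    exists (undup ys); split; first exact: undup_uniq.
    split; first by move=> y; rewrite mem_undup.
    exact: nat_lt_mono (size_undup ys) sz.
  have := r3 (fun y => y \in ys) z cB (conj zub zl) (or_intror erefl).
  case=> y [yys [_ [_ [r2 _]]]].
  have cA : card_lt (fun t => t = a \/ t = y) (fin 3).
    case: (eqVneq a y) => [<-|ne].
      exists [:: a]; split => //; split => // t; rewrite inE.
      by split; [case => ->; rewrite eqxx | move/eqP ->; left].
    exists [:: a; y]; split; first by rewrite /= inE ne.
    split => // t; rewrite !inE.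
    by split; [case => ->; rewrite eqxx ?orbT | case/orP => /eqP ->; [left|right]].
  have gA : is_glb (fun t => t = a \/ t = y) (a `&` y).
    split; first by move=> t [] ->; [exact: leIl | exact: leIr].
    move=> u Hu; rewrite lexI (Hu a (or_introl erefl)) (Hu y (or_intror erefl)) //.
  have := r2 (fun t => t = a \/ t = y) (a `&` y) _ cA gA.
  case.
    by move=> t [] ->; [left; left | right].
  move=> _ [r1' _].
  have le : a `&` y <= w.
    apply: le_trans (Hw (x `&` y) _); last by exists y.
    apply: leI2 => //; exact: leIl.
  have := r1' (a `&` y) w (or_intror erefl) le.
  case=> dj _; exact: (dj w (or_intror erefl)).
have h31 : P3 -> P1.
  move=> H3 a b nab m _.
  exists (good a b); split.
    move=> s Hs; apply: contra nab => Hle; apply: le_trans Hle.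
    apply: M_bound => // t ts; by rewrite (Hs t ts).
  move=> U gU; split.
    move=> x Ux xb.
    have Hs : forall u, u \in [:: x] -> U u by move=> u; rewrite inE => /eqP ->.
    by have := gU _ Hs; rewrite /= -xb leIl.
  split; last split.
  - by move=> x y Ux le; exact: good_up gU Ux le.
  - by move=> A g h1 h2 h3; exact: good_meet gU h1 h2 h3.
  - by move=> B j h1 h2 h3; exact: good_join H3 gU h1 h2 h3.
split; split => //.
- by move=> H; apply: h31; apply: h23.
- by move=> H; apply: h12; apply: h31.
Qed.
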